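(* Let $k\ge 2$ and let $P=(p_1,\dots,p_k)$ and $Q=(q_1,\dots,q_k)$ be two multinomial (categorical) probability distributions over the same index set $\{1,\dots,k\}$. Suppose the indices of the largest probabilities of $P$ and $Q$ do not match, i.e. $\arg\max_i p_i \neq \arg\max_j q_j$. Then $$d_{\chi^2}(Q,P)\;\ge\; \frac{(p_{(1)}-p_{(2)})^2}{(p_{(1)}+p_{(2)})-(p_{(1)}-p_{(2)})^2},$$ where $p_{(1)}$ and $p_{(2)}$ denote the first and second largest probabilities among $p_1,\dots,p_k$.
   Context: The chi-squared distance is $d_{\chi^2}(Q,P)=\sum_{i=1}^k\frac{(q_i-p_i)^2}{p_i}=\sum_{i=1}^k\frac{q_i^2}{p_i}-1$ (taken to be $+\infty$ if some $q_i>0=p_i$). *)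

(* Defs.v *)
From HB Require Import structures.
From mathcomp Require Import all_boot all_order all_algebra.
From mathcomp Require Import reals constructive_ereal.
Set Implicit Arguments. Unset Strict Implicit. Unset Printing Implicit Defensive.
Import Order.TTheory GRing.Theory Num.Theory.
Local Open Scope ring_scope.

Definition is_distr (R : realType) (k : nat) (p : 'I_k -> R) : Prop :=
  (forall i, 0 <= p i) /\ \sum_(i < k) p i = 1.

Definition chi2 (R : realType) (k : nat) (q p : 'I_k -> R) : \bar R :=
  if [exists i, (0 < q i) && (p i == 0)] then +oo%E
  else (\sum_(i < k) (q i - p i) ^+ 2 / p i)%:E.

Definition is_argmax (R : realType) (k : nat) (p : 'I_k -> R) (i : 'I_k) : Prop :=
  forall j, p j <= p i.

Definition sorted_desc (R : realType) (k : nat) (p : 'I_k -> R) : seq R :=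
  sort (fun x y : R => y <= x) [seq p i | i <- enum 'I_k].

Definition pfirst (R : realType) (k : nat) (p : 'I_k -> R) : R :=
  nth 0 (sorted_desc p) 0.
Definition psecond (R : realType) (k : nat) (p : 'I_k -> R) : R :=
  nth 0 (sorted_desc p) 1.

(* Main.v *)
Require Import Defs.
From HB Require Import structures.
From mathcomp Require Import all_boot all_order all_algebra.
From mathcomp Require Import reals constructive_ereal.
From mathcomp Require Import ring lra.
Import Order.TTheory GRing.Theory Num.Theory.
Local Open Scope ring_scope.

Lemma sum2 (R : realType) k (g : 'I_k -> R) i j : i != j ->
  \sum_l g l = g i + g j + \sum_(l | (l != i) && (l != j)) g l.
Proof.
move=> ij; rewrite (bigD1 i) //= (bigD1 j) /=; last by rewrite eq_sym.
by rewrite addrA.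
Qed.

Lemma order_stats (R : realType) k (p : 'I_k -> R) i j :
  is_argmax p i -> i != j -> pfirst p = p i /\ p j <= psecond p /\ psecond p <= pfirst p.
Proof.
move=> hi ij.
have tr : transitive (fun x y : R => y <= x) by move=> x y z /= h1 h2; exact: le_trans h2 h1.
have to : total (fun x y : R => y <= x) by move=> x y; exact: le_total.
have hs : sorted (fun x y : R => y <= x) (sorted_desc p) by exact: sort_sorted.
have hp : perm_eq (sorted_desc p) [seq p l | l <- enum 'I_k] by rewrite /sorted_desc perm_sort.
have ie : i \in enum 'I_k by rewrite mem_enum.
have je : j \in rem i (enum 'I_k) by rewrite mem_rem_uniq ?enum_uniq // inE eq_sym ij mem_enum.
have h1 := perm_to_rem ie; have h2 := perm_to_rem je.
have h3 : perm_eq [seq p l | l <- enum 'I_k] (p i :: p j :: map p (rem j (rem i (enum 'I_k)))).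
  have := perm_map p (perm_trans h1 (etrans (perm_cons i _ _) h2)); by [].
have hp' := perm_trans hp h3.
rewrite /pfirst /psecond.
move: hs hp hp'; case: (sorted_desc p) => [|x0 [|x1 r]] hs hp hp'.
- by have := perm_size hp'.
- by have := perm_size hp'.
rewrite /=.
have hs' : sorted (fun x y : R => y <= x) (x1 :: r) by move: hs => /= /andP[].
have hx : forall w, w \in x1 :: r -> w <= x1.
  move=> w; rewrite inE => /orP[/eqP -> //|wr].
  have := order_path_min tr hs'; move/allP => /(_ w wr) //.
have hx0 : forall w, w \in x0 :: x1 :: r -> w <= x0.
  move=> w; rewrite inE => /orP[/eqP -> //|wr].
  apply: le_trans (hx _ wr) _; by move: hs => /= /andP[].
have mem_p : forall w, w \in x0 :: x1 :: r -> exists l, w = p l.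
  move=> w; rewrite (perm_mem hp) => /mapP[l _ ->]; by exists l.
have pi_in : p i \in x0 :: x1 :: r by rewrite (perm_mem hp') inE eqxx.
have x0e : x0 = p i.
  apply/le_anti/andP; split; last exact: hx0.
  have [l ->] := mem_p x0 (mem_head _ _); exact: hi.
split => //=; split; last by move: hs => /= /andP[].
case: (eqVneq x0 (p i)) => e.
- rewrite e perm_cons in hp'.
  by apply: hx; rewrite (perm_mem hp') inE eqxx.
- by move: e; rewrite x0e eqxx.
Qed.

Lemma term_ge (R : realType) (u p t l : R) : 0 <= p -> (p = 0 -> u = 0) ->
  2 * t * l * u - t ^+ 2 * l ^+ 2 * p <= u ^+ 2 / p.
Proof.
move=> p0 hz; have [pz|pn] := eqVneq p 0.
  by rewrite pz (hz pz) !mulr0 expr0n /= mul0r subrr.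
have pp : 0 < p by rewrite lt_neqAle eq_sym pn p0.
rewrite -subr_ge0.
have -> : u ^+ 2 / p - (2 * t * l * u - t ^+ 2 * l ^+ 2 * p) = (u - t * l * p) ^+ 2 / p.
  by field.
by apply: divr_ge0; [exact: sqr_ge0 | exact: ltW].
Qed.

Theorem mainTheorem3 (R : realType) (k : nat) (p q : 'I_k -> R) :
  (2 <= k)%N ->
  is_distr p -> is_distr q ->
  (exists i j : 'I_k, [/\ is_argmax p i, is_argmax q j & i != j]) ->
  (((pfirst p - psecond p) ^+ 2
     / ((pfirst p + psecond p) - (pfirst p - psecond p) ^+ 2))%:E
  <= chi2 q p)%E.
Proof.
move=> _ [p0 p1] [q0 q1] [i [j [hpi hqj ij]]].
have [ha [hcb hba]] := @order_stats _ _ p i j hpi ij.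
rewrite /chi2; case: ifPn => [_|hex]; first exact: leey.
rewrite lee_fin ha.
have hz : forall l, p l = 0 -> q l - p l = 0.
  move=> l pl; move: hex; rewrite negb_exists => /forallP /(_ l) /=.
  case/nandP => [|/eqP []//]; rewrite -leNgt => ql.
  rewrite pl subr0; apply/le_anti; by rewrite ql q0.
set a := p i; set c := p j; set b := psecond p.
rewrite -/a in hcb hba *.
set mu := a - b; set E := a + b - mu ^+ 2.
set S := \sum_(l < k) _.
have S0 : 0 <= S.
  by apply: sumr_ge0 => l _; apply: divr_ge0; [exact: sqr_ge0 | exact: p0].
have [Ele|Egt] := leP E 0.
  apply: le_trans S0; apply: mulr_ge0_le0; first exact: sqr_ge0.
  by rewrite invr_le0.
set t := mu / E.
pose lam l := mu + (l == j)%:R - (l == i)%:R.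
have step : \sum_l (2 * t * lam l * (q l - p l) - t ^+ 2 * lam l ^+ 2 * p l) <= S.
  by apply: ler_sum => l _; apply: term_ge => //; exact: hz.
apply: le_trans step.
rewrite (@sum2 _ _ _ i j ij) (eq_bigr (fun l => 2 * t * mu * (q l - p l) - t ^+ 2 * mu ^+ 2 * p l)); last first.
  move=> l /andP[li lj]; by rewrite /lam (negbTE li) (negbTE lj) subr0 addr0.
set P := (fun l : 'I_k => (l != i) && (l != j)).
have er : \sum_(l | P l) (2 * t * mu * (q l - p l) - t ^+ 2 * mu ^+ 2 * p l)
   = 2 * t * mu * (\sum_(l | P l) q l - \sum_(l | P l) p l) - t ^+ 2 * mu ^+ 2 * \sum_(l | P l) p l.
  by rewrite big_split /= sumrN -!mulr_sumr big_split /= sumrN.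
rewrite er.
have hq := @sum2 _ _ q i j ij; have hp := @sum2 _ _ p i j ij.
rewrite q1 in hq; rewrite p1 in hp.
rewrite /lam !eqxx (negbTE ij) eq_sym (negbTE ij) /=.
have eQ : \sum_(l < k | P l) q l = 1 - q i - q j by rewrite hq /P; ring.
have eP : \sum_(l < k | P l) p l = 1 - p i - p j by rewrite hp /P; ring.
rewrite eQ eP.
have tE : t * E = mu by rewrite /t mulrAC -mulrA divff ?mulr1 // gt_eqF.
have mu0 : 0 <= mu by rewrite /mu subr_ge0 /a -ha.
have t0 : 0 <= t by rewrite /t divr_ge0 // ltW.
have hN : mu <= q j - q i + a - c.
  have := hqj i; rewrite /mu /a /c /b; lra.
have hD : mu ^+ 2 + (2 * mu + 1) * c + (1 - 2 * mu) * a <= E.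
  have -> : E = mu ^+ 2 + (2 * mu + 1) * c + (1 - 2 * mu) * a + (b - c) * (1 + 2 * mu).
    rewrite /E /mu; ring.
  rewrite lerDl; apply: mulr_ge0; first by rewrite subr_ge0.
  lra.
have -> : mu ^+ 2 / E = t * mu by rewrite /t; field; rewrite gt_eqF.
have h1 : 0 <= t * (q j - q i + a - c - mu) by apply: mulr_ge0 => //; lra.
have h2 : 0 <= t ^+ 2 * (E - (mu ^+ 2 + (2 * mu + 1) * c + (1 - 2 * mu) * a)).
  by apply: mulr_ge0; [exact: sqr_ge0 | lra].
have h3 : t ^+ 2 * E = t * mu by rewrite expr2 -mulrA tE.
rewrite /a /c in h1 h2 hN hD *.
nra.
Qed.
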